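(* Let $G$ be a graph, let $k\ge1$ be an integer and let $d:=\Delta(G^{\lfloor k/2\rfloor})$. Then $G^k$ is a $\lfloor k/2\rfloor$-shallow minor of $G\circ\overline{K_{d+1}}$.
   Context: Graphs are finite, simple, undirected. For an integer $m\ge0$, $G^m$ has vertex set $V(G)$ with distinct $u,v$ adjacent iff $\mathrm{dist}_G(u,v)\le m$. $\Delta$ is maximum degree. $\overline{K_n}$ is the edgeless graph on $n$ vertices. The lexicographic product $G_1\circ G_2$ has vertex set $V(G_1)\times V(G_2)$, with $(a,v)(b,u)$ an edge iff $ab\in E(G_1)$, or $a=b$ and $uv\in E(G_2)$; thus in $G\circ\overline{K_n}$, $(a,i)(b,j)$ is an edge iff $ab\in E(G)$. $H$ is an $r$-shallow minor of $G'$ if there are pairwise vertex-disjoint connected subgraphs $\mu(v)$ ($v\in V(H)$) of $G'$, each of radius at most $r$, such that for every $vw\in E(H)$ some edge of $G'$ joins $\mu(v)$ and $\mu(w)$. *)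

(* Defs.v *)
(* Graphs: a finite simple graph is a symmetric irreflexive
   relation e : rel T on a finType T. *)
From mathcomp Require Import all_boot all_order.
From Stdlib Require Import ClassicalEpsilon.
Set Implicit Arguments. Unset Strict Implicit. Unset Printing Implicit Defensive.

Definition dist_le (T : finType) (e : rel T) (m : nat) (u v : T) : Prop :=
  exists s : seq T, [&& size s <= m, path e u s & last u s == v].

Definition gpow (T : finType) (e : rel T) (m : nat) : T -> T -> Prop :=
  fun u v => u <> v /\ dist_le e m u v.

Definition asb (P : Prop) : bool :=
  if excluded_middle_informative P then true else false.

Definition deg (T : finType) (e : T -> T -> Prop) (v : T) : nat :=
  #|[set u : T | asb (e v u)]|.
Definition maxdeg (T : finType) (e : T -> T -> Prop) : nat :=
  \max_(v : T) deg e v.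

(* Lexicographic product G o (edgeless graph on n vertices):
   (a,i)(b,j) is an edge iff ab is an edge of G. *)
Definition lexK (T : finType) (e : rel T) (n : nat) : rel (T * 'I_n) :=
  fun x y => e x.1 y.1.
Arguments lexK {T} e n.

(* H (vertex type V, adjacency h) is an r-shallow minor of G' (vertex type W,
   adjacency g): there are pairwise vertex-disjoint subgraphs
   (vertex set mu v, edge relation sub v, a symmetric subrelation of g on mu v),
   each of radius at most r (hence connected): some centre c in mu v reaches
   every vertex of mu v by a walk of length <= r inside the subgraph; and every
   edge vw of H is joined by an edge of G' between mu v and mu w. *)
Definition shallow_minor (V W : finType) (h : V -> V -> Prop) (r : nat)
  (g : rel W) : Prop :=
  exists (mu : V -> {set W}) (sub : V -> rel W),
    [/\ forall v w, v <> w -> [disjoint mu v & mu w],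
        forall v x y, sub v x y -> [/\ x \in mu v, y \in mu v & g x y],
        forall v, symmetric (sub v),
        forall v, exists2 c, c \in mu v &
                    forall x, x \in mu v -> dist_le (sub v) r c x
      & forall v w, h v w -> exists x y, [/\ x \in mu v, y \in mu w & g x y]].

(* Main.v *)
Require Import Defs.
From mathcomp Require Import all_boot all_order.
From mathcomp Require Import zify.
From Stdlib Require Import ClassicalEpsilon.

Set Implicit Arguments. Unset Strict Implicit. Unset Printing Implicit Defensive.

Lemma asbP (P : Prop) : reflect P (asb P).
Proof. by rewrite /asb; case: excluded_middle_informative => h; constructor. Qed.

Lemma last_take' (T : Type) (s : seq T) (a : T) (j : nat) :
  j <= size s -> last a (take j s) = nth a (a :: s) j.
Proof.
elim: s a j => [|b s IH] a [|j] //= hj.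
rewrite IH //; apply: set_nth_default => /=; by [].
Qed.

Lemma dist_mono (T : finType) (e : rel T) n m u v :
  n <= m -> dist_le e n u v -> dist_le e m u v.
Proof.
move=> nm [s /and3P[sz p l]]; exists s; rewrite p l (leq_trans sz nm) //.
Qed.

Lemma dist_snoc (T : finType) (e : rel T) n u a b :
  dist_le e n u a -> e a b -> dist_le e n.+1 u b.
Proof.
move=> [s /and3P[sz p /eqP l]] eab; exists (rcons s b).
by rewrite size_rcons ltnS sz rcons_path p l eab last_rcons eqxx.
Qed.

Lemma dist_rev (T : finType) (e : rel T) n u v :
  symmetric e -> dist_le e n u v -> dist_le e n v u.
Proof.
move=> sym [s /and3P[sz p /eqP l]]; exists (rev (belast u s)).
rewrite size_rev size_belast sz /=.
have -> : path e v (rev (belast u s)).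
  rewrite -l rev_path; apply: sub_path p => x y; by rewrite sym.
have := lastI u s; rewrite l => H.
have : rev (u :: s) = v :: rev (belast u s) by rewrite H rev_rcons.
rewrite rev_cons => H'; by rewrite -(last_cons u v) -H' last_rcons eqxx.
Qed.

Lemma dist_split (T : finType) (e : rel T) a s j :
  path e a s -> j <= size s ->
  dist_le e j a (nth a (a :: s) j) /\
  dist_le e (size s - j) (nth a (a :: s) j) (last a s).
Proof.
move=> p hj.
have hl := last_take' a hj.
move: p; rewrite -{1}(cat_take_drop j s) cat_path => /andP[p1 p2].
split.
  exists (take j s); rewrite size_take p1 hl eqxx !andbT.
  by case: ltnP.
exists (drop j s); rewrite size_drop leqnn -hl p2 /=.
by rewrite -last_cat cat_take_drop eqxx.
Qed.

Theorem lemma26 (T : finType) (e : rel T) (k : nat) :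
  symmetric e -> irreflexive e -> 1 <= k ->
  shallow_minor (gpow e k) k./2
    (lexK e (maxdeg (gpow e k./2)).+1).
Proof.
move=> sym irr k1.
have hk : k <= k./2 + k./2 + 1.
  have := odd_double_half k; rewrite -addnn; case: (odd k) => /= <-; lia.
move: hk; set r := k./2 => hk.
set d := maxdeg (gpow e r).
pose B u : {set T} := [set w | asb (dist_le e r w u)].
have Bcard u : #|B u| <= d.+1.
  have sub : B u \subset u |: [set w | asb (gpow e r u w)].
    apply/subsetP => w; rewrite !inE => /asbP H.
    case: (eqVneq w u) => [->|ne]; first by [].
    rewrite /=; apply/asbP; split.
      by move=> E; rewrite E eqxx in ne.
    exact: dist_rev.
  apply: (leq_trans (subset_leq_card sub)); rewrite cardsU1.
  apply: (leq_trans (leq_add (leq_b1 _) (leqnn _))); rewrite add1n ltnS.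
  exact: (@leq_bigmax _ (fun v => deg (gpow e r) v) u).
pose f u v : 'I_d.+1 := inord (index v (enum (B u))).
have fval u v : v \in B u -> (f u v : nat) = index v (enum (B u)).
  move=> Hv; rewrite /f inordK // (leq_trans _ (Bcard u)) //.
  by rewrite cardE index_mem mem_enum.
have finj u v w : v \in B u -> w \in B u -> f u v = f u w -> v = w.
  move=> Hv Hw E; have := congr1 val E; rewrite /= !fval // => Ei.
  have Hv' : v \in enum (B u) by rewrite mem_enum.
  have Hw' : w \in enum (B u) by rewrite mem_enum.
  by rewrite -(nth_index v Hv') Ei nth_index.
have BP u w : (w \in B u) = asb (dist_le e r w u) by rewrite inE.
pose mu v : {set T * 'I_d.+1} := [set x | (v \in B x.1) && (x.2 == f x.1 v)].
have muP v u : (u, f u v) \in mu v = (v \in B u) by rewrite inE /= eqxx andbT.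
pose sub v (x y : T * 'I_d.+1) := [&& x \in mu v, y \in mu v & lexK e d.+1 x y].
exists mu, sub; split.
- move=> v w nvw; rewrite -setI_eq0; apply/eqP/setP => x; rewrite !inE.
  apply/negP => /andP[/andP[Hv /eqP Ev] /andP[Hw /eqP Ew]]; apply: nvw.
  apply: (finj x.1 v w); [by rewrite BP | by rewrite BP | by rewrite -Ev -Ew].
- by move=> v x y /and3P[].
- move=> v x y; rewrite /sub /lexK sym; by case: (x \in mu v); case: (y \in mu v).
- move=> v; exists (v, f v v).
    by rewrite muP BP; apply/asbP; exists [::]; rewrite /= eqxx.
  have lift : forall s a n, path e a s -> dist_le e n v a -> n + size s <= r ->
      path (sub v) (a, f a v) (map (fun y => (y, f y v)) s).
    elim=> [|b s IH] a n //= /andP[eab ps] da le.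
    rewrite (IH b n.+1 ps (dist_snoc da eab)) ?andbT; last by rewrite addSnnS.
    rewrite /sub !muP !BP /lexK /= eab andbT.
    apply/andP; split; apply/asbP.
      by apply: dist_mono da; lia.
    by apply: dist_mono (dist_snoc da eab); lia.
  move=> [u i]; rewrite inE /= => /andP[Hu /eqP ->].
  move: (Hu); rewrite BP => /asbP [s /and3P[sz ps /eqP ls]].
  exists (map (fun y => (y, f y v)) s).
  rewrite size_map sz /= (last_map (fun y => (y, f y v))) ls eqxx andbT.
  apply: (lift s v 0 ps); last by [].
  by exists [::]; rewrite /= eqxx.
- move=> v w [nvw [s /and3P[sz ps /eqP ls]]].
  have m0 : 0 < size s by case: s ls {sz ps} => //= E; rewrite E in nvw.
  set i := minn r (size s).-1.
  have hi : i < size s by rewrite /i; lia.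
  have [d1 _] := dist_split ps (ltnW hi).
  have [_ d2] := dist_split ps hi.
  exists (nth v (v :: s) i, f (nth v (v :: s) i) v), (nth v s i, f (nth v s i) w).
  split.
  + rewrite muP BP; apply/asbP; apply: dist_mono d1; rewrite /i; lia.
  + rewrite muP BP; apply/asbP; rewrite ls in d2.
    apply: dist_mono (dist_rev sym d2); rewrite /i; lia.
  + rewrite /lexK /=; exact: (pathP v ps i hi).
Qed.
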